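(* For an integer $k\ge2$, let $\mathcal{X}_k$ be the set of all multisets $S\subset[0,1]^2$ of size exactly $k$ (counting multiplicity), equipped with $$\mathrm{EMD}(S,T)=\min_{\pi:S\to T}\frac1k\sum_{s\in S}\|s-\pi(s)\|_2,$$ the minimum over bijections $\pi$ between the multisets. Then $\mathrm{diam}(\mathcal{X}_k)\le\sqrt2$, and there is an absolute constant $C$ such that $\mathrm{ddim}(\mathcal{X}_k)\le Ck\log k$ for all $k\ge2$.
   Context: The doubling constant $\lambda$ of a metric space is the smallest number such that every ball can be covered by $\lambda$ balls of half the radius; the doubling dimension is $\mathrm{ddim}=\log_2\lambda$. *)

(* Defs.v *)
From mathcomp Require Import all_boot all_fingroup.
From Stdlib Require Import Reals.

Set Implicit Arguments.
Unset Strict Implicit.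
Unset Printing Implicit Defensive.

Local Open Scope R_scope.

Definition pt := (R * R)%type.

Definition dist2 (p q : pt) : R :=
  sqrt ((fst p - fst q) * (fst p - fst q) + (snd p - snd q) * (snd p - snd q)).

Definition in_unit_square (p : pt) : Prop :=
  0 <= fst p <= 1 /\ 0 <= snd p <= 1.

(* A multiset of size k, given by an enumeration of its elements
   (with multiplicity); EMD below is invariant under re-enumeration. *)
Definition config (k : nat) := 'I_k -> pt.

Definition in_Xk (k : nat) (S : config k) : Prop :=
  forall i, in_unit_square (S i).

Definition match_cost (k : nat) (S T : config k) (p : {perm 'I_k}) : R :=
  \big[Rplus/0]_(i < k) dist2 (S i) (T (p i)).

(* EMD(S,T) = min over bijections of (1/k) * sum of distances.
   (The identity-permutation cost is used as the neutral element of the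
   min; it is itself one of the terms, so this is the true minimum.) *)
Definition EMD (k : nat) (S T : config k) : R :=
  / INR k * \big[Rmin/match_cost S T 1%g]_(p : {perm 'I_k}) match_cost S T p.

Definition doubling_cover (k m : nat) : Prop :=
  forall (S : config k) (r : R), in_Xk S -> 0 < r ->
    exists c : 'I_m -> config k,
      (forall j, in_Xk (c j)) /\
      forall T : config k, in_Xk T -> EMD S T <= r ->
        exists j, EMD (c j) T <= r / 2.

Definition doubling_constant (k lam : nat) : Prop :=
  doubling_cover k lam /\ forall m, doubling_cover k m -> (lam <= m)%nat.

Definition ddim_of (lam : nat) : R := ln (INR lam) / ln 2.

(* Main.v *)
Require Import Defs.
From mathcomp Require Import all_boot all_fingroup zify.
From Stdlib Require Import Reals Lra Lia ZArith Classical.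
Open Scope R_scope.
Set Implicit Arguments.

Lemma ln_le' x y : 0 < x -> x <= y -> ln x <= ln y.
Proof. intros hx [h|h]; [left; apply ln_increasing; auto | subst; lra]. Qed.

Lemma ln_nonpos x : x <= 0 -> ln x = 0.
Proof. intros h. unfold ln. destruct (Rlt_dec 0 x) as [a|a]. exfalso; lra. reflexivity. Qed.

Lemma bigmin_attained (I : Type) (r : seq I) (F : I -> R) i0 :
  exists i, \big[Rmin/F i0]_(i <- r) F i = F i.
Proof.
elim: r => [|a r [i IH]]; first by exists i0; rewrite big_nil.
rewrite big_cons IH; unfold Rmin; destruct Rle_dec; eauto.
Qed.

Lemma bigmin_le (I : eqType) (r : seq I) (F : I -> R) x0 i :
  i \in r -> \big[Rmin/x0]_(j <- r) F j <= F i.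
Proof.
elim: r => // a r IH; rewrite inE big_cons => /orP [/eqP ->| H].
  apply Rmin_l.
eapply Rle_trans; [apply Rmin_r| exact (IH H)].
Qed.

Lemma bigsum_ge0 (I : Type) (r : seq I) (F : I -> R) :
  (forall j, 0 <= F j) -> 0 <= \big[Rplus/0]_(j <- r) F j.
Proof. move=> H; elim: r => [|a r IH]; rewrite ?big_nil ?big_cons; [lra|]. have := H a; lra. Qed.

Lemma bigsum_term (I : eqType) (r : seq I) (F : I -> R) i :
  (forall j, 0 <= F j) -> i \in r -> F i <= \big[Rplus/0]_(j <- r) F j.
Proof.
move=> H0; elim: r => // a r IH; rewrite inE big_cons => /orP [/eqP ->| H].
  have := @bigsum_ge0 _ r F H0; rewrite /=; lra.
have := IH H; have := H0 a; lra.
Qed.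

Lemma bigsum_mono (I : Type) (r : seq I) (F G : I -> R) :
  (forall j, F j <= G j) -> \big[Rplus/0]_(j <- r) F j <= \big[Rplus/0]_(j <- r) G j.
Proof. move=> H; elim: r => [|a r IH]; rewrite ?big_nil ?big_cons; [lra|]. have := H a; lra. Qed.

Lemma bigsum_const_le k (F : 'I_k -> R) c :
  (forall i, F i <= c) -> \big[Rplus/0]_(i < k) F i <= INR k * c.
Proof.
move=> H; apply: (@Rle_trans _ (\big[Rplus/0]_(i < k) c)); first exact: (@bigsum_mono _ _ F (fun=> c) H).
rewrite big_const_ord; elim: (k) => [|n IH]; first by rewrite /=; lra.
rewrite S_INR iterS; lra.


Qed.

Lemma ex_min_nat (P : nat -> Prop) n : P n -> exists l, P l /\ forall m, P m -> (l <= m)%nat.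
Proof.
elim/ltn_ind: n => n IH Pn.
destruct (classic (exists m, (m < n)%nat /\ P m)) as [[m [lt Pm]]|N].
  exact: IH m lt Pm.
exists n; split=>// m Pm; rewrite leqNgt; apply/negP => lt; apply N; eauto.
Qed.

Lemma floor_facts x h : 0 < h ->
  h * IZR (Int_part (x / h)) <= x /\ x - h * IZR (Int_part (x / h)) < h.
Proof.
move=> hh; have [a b] := base_Int_part (x / h).
have e : x = h * (x / h) by field; lra.
set y := x / h in a b e *; rewrite e; split; nra.
Qed.

Lemma EMD_attained k (S T : config k) : exists p, EMD S T = / INR k * match_cost S T p.
Proof.
rewrite /EMD; have [p ->] := bigmin_attained (index_enum {perm 'I_k}) (match_cost S T) 1%g.
by exists p.
Qed.

Lemma EMD_le k (S T : config k) p : (0 < k)%nat -> EMD S T <= / INR k * match_cost S T p.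
Proof.
move=> k0; rewrite /EMD; apply Rmult_le_compat_l.
  apply/Rlt_le/Rinv_0_lt_compat/lt_0_INR; apply/ltP; exact k0.
by apply: bigmin_le; rewrite mem_index_enum.
Qed.

Lemma clamp_id x : 0 <= x <= 1 -> Rmax 0 (Rmin 1 x) = x.
Proof. move=> h; unfold Rmax, Rmin; repeat destruct Rle_dec; lra. Qed.

Lemma coord_le (s t : pt) : Rabs (fst s - fst t) <= dist2 s t /\ Rabs (snd s - snd t) <= dist2 s t.
Proof.
rewrite /dist2; split; rewrite -sqrt_Rsqr_abs; apply sqrt_le_1_alt; [have := Rle_0_sqr (snd s - snd t) | have := Rle_0_sqr (fst s - fst t)]; unfold Rsqr; lra.
Qed.

Lemma point_round (t : pt) r : 0 < r -> in_unit_square t ->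
  let g := (r/4 * IZR (Int_part (fst t / (r/4))), r/4 * IZR (Int_part (snd t / (r/4)))) in
  in_unit_square g /\ dist2 g t <= r/2.
Proof.
move=> hr [[x0 x1] [y0 y1]] g.
have h4 : 0 < r/4 by lra.
have [a b] := floor_facts (fst t) h4.
have [c d] := floor_facts (snd t) h4.
rewrite /g /in_unit_square /dist2 /=.
split; [split; split|]; try lra.
- have [e e'] := base_Int_part (fst t / (r/4)).
  have : 0 <= fst t / (r/4) by apply Rmult_le_pos; [lra| apply Rlt_le, Rinv_0_lt_compat; lra].
  move=> hh; have : (-1 < Int_part (fst t / (r/4)))%Z by apply lt_IZR; lra.
  move=> hz; have : (0 <= Int_part (fst t / (r/4)))%Z by lia.
  move=> /IZR_le; rewrite /=; nra.
- have [e e'] := base_Int_part (snd t / (r/4)).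
  have : 0 <= snd t / (r/4) by apply Rmult_le_pos; [lra| apply Rlt_le, Rinv_0_lt_compat; lra].
  move=> hh; have : (-1 < Int_part (snd t / (r/4)))%Z by apply lt_IZR; lra.
  move=> hz; have : (0 <= Int_part (snd t / (r/4)))%Z by lia.
  move=> /IZR_le; rewrite /=; nra.
- rewrite -(sqrt_square (r/2)); last lra.
  apply sqrt_le_1_alt; nra.
Qed.

Lemma digit_bound x y h (k : nat) : 0 < h -> Rabs (x - y) <= INR k * (4 * h) ->
  (- (4 * Z.of_nat k + 1) < Int_part (x / h) - Int_part (y / h) < 4 * Z.of_nat k + 1)%Z.
Proof.
move=> hh hxy.
have [a b] := base_Int_part (x / h).
have [c d] := base_Int_part (y / h).
have ex : x = h * (x / h) by field; lra.
have ey : y = h * (y / h) by field; lra.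
rewrite ex ey in hxy.
set X := x / h in a b ex hxy *; set Y := y / h in c d ey hxy *.
have hb : Rabs (X - Y) <= INR k * 4.
  have e : h * X - h * Y = h * (X - Y) by ring.
  rewrite e Rabs_mult Rabs_pos_eq in hxy; last lra.
  nra.
have hb1 := Rle_abs (X - Y); have hb2 := Rle_abs (-(X - Y)); rewrite Rabs_Ropp in hb2.
rewrite INR_IZR_INZ in hb.
set IX := Int_part X in a b *; set IY := Int_part Y in c d *; clearbody IX IY.
split; apply lt_IZR; rewrite ?opp_IZR minus_IZR ?plus_IZR mult_IZR; lra.
Qed.

Lemma dist2_sym s t : dist2 s t = dist2 t s.
Proof. rewrite /dist2; f_equal; ring. Qed.

Lemma cover_ok k : (2 <= k)%nat -> doubling_cover k (expn ((8*k+3)*(8*k+3)) k).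
Proof.
move=> k2 S r HS Hr.
set D := (8*k+3)%nat.
pose F := {ffun 'I_k -> 'I_D * 'I_D}.
have cardF : #|{: F}| = expn (D*D) k by rewrite card_ffun card_prod !card_ord.
pose h := r/4.
pose fl x := Int_part (x / h).
pose M := (4 * Z.of_nat k + 1)%Z.
pose dec (d : 'I_D) := (Z.of_nat d - M)%Z.
pose clamp x := Rmax 0 (Rmin 1 x).
pose cen (f : F) : config k := fun i =>
  (clamp (h * IZR (fl (fst (S i)) + dec (f i).1)),
   clamp (h * IZR (fl (snd (S i)) + dec (f i).2))).
exists (fun j => cen (enum_val (cast_ord (esym cardF) j))).
split.
  move=> j i; rewrite /cen /in_unit_square /= /clamp; split; split; unfold Rmax, Rmin; repeat destruct Rle_dec; lra.
move=> T HT HST.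
have [p Hp] := EMD_attained S T.
have k0 : 0 < INR k by apply lt_0_INR; lia.
have Hc : match_cost S T p <= INR k * r.
  rewrite Hp in HST.
  apply (Rmult_le_reg_l (/ INR k)); first by apply Rinv_0_lt_compat.
  rewrite -Rmult_assoc Rinv_l ?Rmult_1_l; lra.
have Hd : forall i, dist2 (S i) (T (p i)) <= INR k * r.
  move=> i; apply: Rle_trans Hc; rewrite /match_cost.
  exact: (@bigsum_term _ _ (fun j => dist2 (S j) (T (p j))) i (fun j => sqrt_pos _) (mem_index_enum i)).
have Hb : forall i,
  ((- M < fl (fst (T (p i))) - fl (fst (S i)) < M) /\
   (- M < fl (snd (T (p i))) - fl (snd (S i)) < M))%Z.
  move=> i; have [c1 c2] := coord_le (T (p i)) (S i).
  rewrite dist2_sym in c1 c2.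
  have e : INR k * r = INR k * (4 * h) by rewrite /h; field.
  split; apply: digit_bound; rewrite /h; try lra; rewrite -/h -e;
    [exact: Rle_trans c1 (Hd i)| exact: Rle_trans c2 (Hd i)].
have Hx : forall i, (Z.to_nat (fl (fst (T (p i))) - fl (fst (S i)) + M) < D)%nat.
  move=> i; have := Hb i; rewrite /D /M; lia.
have Hy : forall i, (Z.to_nat (fl (snd (T (p i))) - fl (snd (S i)) + M) < D)%nat.
  move=> i; have := Hb i; rewrite /D /M; lia.
pose f : F := [ffun i => (Ordinal (Hx i), Ordinal (Hy i))].
exists (cast_ord cardF (enum_rank f)).
rewrite cast_ordK enum_rankK.
apply: Rle_trans (EMD_le _ _ p _) _; first lia.
have Hcen : forall i, cen f i = (h * IZR (fl (fst (T (p i)))), h * IZR (fl (snd (T (p i))))).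
  move=> i; rewrite /cen ffunE /dec /=.
  have [_ [e1 e2]] := Hb i.
  have -> : (fl (S i).1 + (Z.of_nat (Z.to_nat (fl (T (p i)).1 - fl (S i).1 + M)) - M) = fl (T (p i)).1)%Z.
    have := Hb i; lia.
  have -> : (fl (S i).2 + (Z.of_nat (Z.to_nat (fl (T (p i)).2 - fl (S i).2 + M)) - M) = fl (T (p i)).2)%Z.
    have := Hb i; lia.
  have [[[u1 u2] [v1 v2]] _] := point_round Hr (HT (p i)).
  by rewrite /clamp !clamp_id.
have Hsum : match_cost (cen f) T p <= INR k * (r / 2).
  apply: bigsum_const_le => i; rewrite Hcen.
  exact: (proj2 (point_round Hr (HT (p i)))).
apply (Rle_trans _ (/ INR k * (INR k * (r / 2)))).
  apply Rmult_le_compat_l; last exact Hsum.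
  by apply/Rlt_le/Rinv_0_lt_compat.
rewrite -Rmult_assoc Rinv_l ?Rmult_1_l; lra.
Qed.
Unset Implicit Arguments.

Lemma INR_expn a n : INR (expn a n) = INR a ^ n.
Proof. elim: n => [|n IH]; first by rewrite expn0. by rewrite expnS -multE mult_INR IH. Qed.

Theorem mainTheorem8 :
  (forall (k : nat), (2 <= k)%nat ->
     forall S T : config k, in_Xk S -> in_Xk T -> (EMD S T <= sqrt 2)%R) /\
  (exists C : R, forall (k : nat), (2 <= k)%nat ->
     exists lam : nat, doubling_constant k lam /\
       (ddim_of lam <= C * INR k * ln (INR k))%R).
Proof.
split.
  move=> k k2 S T HS HT.
  have k0 : 0 < INR k by apply lt_0_INR; lia.
  apply: Rle_trans (EMD_le _ _ 1%g _) _; first lia.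
  have Hs : match_cost S T 1%g <= INR k * sqrt 2.
    apply: bigsum_const_le => i.
    have [[a1 a2] [b1 b2]] := HS i; have [[c1 c2] [d1 d2]] := HT ((1%g : {perm 'I_k}) i).
    apply sqrt_le_1_alt; nra.
  apply (Rle_trans _ (/ INR k * (INR k * sqrt 2))).
    apply Rmult_le_compat_l; last exact Hs.
    by apply/Rlt_le/Rinv_0_lt_compat.
  rewrite -Rmult_assoc Rinv_l ?Rmult_1_l; lra.
have l2 : 0 < ln 2 by have := ln_lt_2; lra.
exists (10 / ln 2) => k k2.
have [lam [Hl Hmin]] := @ex_min_nat (doubling_cover k) _ (cover_ok k2).
exists lam; split; first by split.
set D := (8 * k + 3)%nat.
set m := expn (D * D) k.
have lm : (lam <= m)%nat by exact: Hmin _ (cover_ok k2).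
have kR : 2 <= INR k by apply (le_INR 2); lia.
have Dpos : 0 < INR D.
  apply lt_0_INR; lia.
have eD : INR D = 8 * INR k + 3.
  rewrite /D -?plusE -?multE plus_INR mult_INR; simpl; lra.
have lnm : ln (INR m) = INR k * (2 * ln (INR D)).
  rewrite /m INR_expn ln_pow; last first.
    rewrite -multE mult_INR; exact: Rmult_lt_0_compat.
  rewrite -multE mult_INR ln_mult //; ring.
have lnD : ln (INR D) <= 5 * ln (INR k).
  replace (5 * ln (INR k)) with (INR 5 * ln (INR k)) by (simpl; ring).
  rewrite -ln_pow; last lra.
  apply ln_le'; first lra.
  rewrite eD; simpl.
  set x := INR k in kR *.
  have h2 : 4 <= x * x by nra.
  have h4 : 16 <= (x * x) * (x * x) by nra.
  have h5 : 16 * x <= x * ((x * x) * (x * x)) by nra.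
  have -> : x * (x * (x * (x * (x * 1)))) = x * ((x * x) * (x * x)) by ring.
  lra.
have lk : 0 <= ln (INR k).
  rewrite -ln_1; apply ln_le'; lra.
have Hlam : ln (INR lam) <= ln (INR m).
  case: (posnP lam) => [->|lp].
    rewrite ln_nonpos /=; last lra.
    rewrite lnm; have : 0 <= ln (INR D).
      rewrite -ln_1; apply ln_le'; lra.
    nra.
  apply ln_le'; first by apply lt_0_INR; lia.
  apply le_INR; lia.
rewrite /ddim_of /Rdiv.
apply (Rle_trans _ (ln (INR m) * / ln 2)).
  apply Rmult_le_compat_r; last exact Hlam.
  by apply/Rlt_le/Rinv_0_lt_compat.
rewrite lnm.
apply (Rle_trans _ (10 * INR k * ln (INR k) * / ln 2)).
  apply Rmult_le_compat_r; first by apply/Rlt_le/Rinv_0_lt_compat.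
  nra.
right; field; lra.
Qed.
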